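(* Let $k$ be a field with $w:=\operatorname{char}k$, $X$ a normal $k$-variety, $U=\operatorname{Spec}B\subset X$ an affine open subset, and $V$ a prime divisor with $V\cap U=\operatorname{div}(g)$ for some $g\in B$. Let $D$ be a $\mathbb{Q}$-divisor with $D|_U=\frac pq (V\cap U)$, $p,q$ coprime, $q>0$; let $d\in\mathbb{Z}$ and $s:=\lfloor pd/q\rfloor$. Then with $\varphi_U(f)=fT^d\cdot T\partial_T$ and $\psi_U(\delta)=\sigma_\delta$ there are short exact sequences of $\mathcal{O}_U$-modules as follows. If $pd\equiv-1\pmod q$ and $w\nmid q$: $0\to\mathcal{O}_U(sV)\xrightarrow{\varphi_U}(\pi_*\Theta_C)_d|_U\xrightarrow{\psi_U}\Theta_U(sV)\to0$. If $pd\equiv-1\pmod q$ and $w\mid q$: $0\to\mathcal{O}_U(sV+V)\xrightarrow{\varphi_U}(\pi_*\Theta_C)_d|_U\xrightarrow{\psi_U}\mathcal{D}er_U(-\log V)(sV)\to0$. Otherwise: $0\to\mathcal{O}_U(sV)\xrightarrow{\varphi_U}(\pi_*\Theta_C)_d|_U\xrightarrow{\psi_U}\mathcal{D}er_U(-\log V)(sV)\to0$.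
   Context: For integers, ''$w\mid q$'' means $q\in w\mathbb{Z}$ (never true when $w=0$). For a $\mathbb{Q}$-divisor $S$, $\mathcal{O}_X(S):=\mathcal{O}_X(\lfloor S\rfloor)$. $T$ is an indeterminate, $\mathcal{A}:=\bigoplus_{i\in\mathbb{Z}}\mathcal{O}_X(iD)T^i$ (on $U$ this is $\bigoplus_iBg^{-\lfloor pi/q\rfloor}T^i$), $\pi:C=\operatorname{Spec}_X\mathcal{A}\to X$, $\Theta_C=\mathcal{D}er_k(\mathcal{O}_C)$, and $(\pi_*\Theta_C)_d$ is the sheaf of $k$-derivations of $\mathcal{A}$ mapping $\mathcal{O}_X(iD)T^i$ into $\mathcal{O}_X((i+d)D)T^{i+d}$. Each such $\delta$ extends to $K(X)(T)$ and $T^{-d}\delta=\sigma_\delta+\alpha_\delta T\partial_T$ uniquely with $\alpha_\delta\in K(X)$, $\sigma_\delta$ a $k$-derivation of $K(X)$ (with $\sigma_\delta(T)=0$). $\Theta_U(sV)=\mathcal{D}er_k(\mathcal{O}_U)\otimes\mathcal{O}_U(sV)$ and $\mathcal{D}er_U(-\log V)(sV)=\mathcal{D}er_U(-\log V)\otimes\mathcal{O}_U(sV)$, where $\mathcal{D}er_U(-\log V)$ is the sheaf of $k$-derivations $\theta$ of $\mathcal{O}_U$ with $\theta(g\mathcal{O}_U)\subset g\mathcal{O}_U$. *)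

(* Defs.v *)
From HB Require Import structures.
From mathcomp Require Import all_boot all_order all_algebra.
Set Implicit Arguments. Unset Strict Implicit. Unset Printing Implicit Defensive.
Import Order.TTheory GRing.Theory Num.Theory.
Local Open Scope ring_scope.

Section Defs.
Variable K : fieldType.
(* K plays the role of the function field K(X) = Frac B.                     *)

Definition is_subfield (k : {pred K}) : Prop :=
  [/\ 1 \in k, {in k &, forall x y, x - y \in k},
      {in k &, forall x y, x * y \in k} & {in k, forall x, x^-1 \in k}].

Definition is_subring (B : {pred K}) : Prop :=
  [/\ 1 \in B, {in B &, forall x y, x - y \in B} & {in B &, forall x y, x * y \in B}].

Inductive gen_by (k : {pred K}) (s : seq K) : K -> Prop :=
  | gen_const c : c \in k -> gen_by k s c
  | gen_elt x : x \in s -> gen_by k s x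
  | gen_add x y : gen_by k s x -> gen_by k s y -> gen_by k s (x + y)
  | gen_opp x : gen_by k s x -> gen_by k s (- x)
  | gen_mul x y : gen_by k s x -> gen_by k s y -> gen_by k s (x * y).

Definition fg_algebra (k B : {pred K}) : Prop :=
  exists s : seq K, forall x, x \in B <-> gen_by k s x.

Definition is_frac_field_of (B : {pred K}) : Prop :=
  forall x : K, exists a b, [/\ a \in B, b \in B, b != 0 & x = a / b].

Definition integrally_closed (B : {pred K}) : Prop :=
  forall (P : {poly K}) (x : K),
    P \is monic -> P \is a polyOver B -> root P x -> x \in B.

(* g B is a (nonzero) prime ideal of B *)
Definition prime_elt (B : {pred K}) (g : K) : Prop :=
  [/\ g \in B, g != 0, g^-1 \notin B &
      {in B &, forall a b, (a * b) / g \in B -> a / g \in B \/ b / g \in B}].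

(* w | q  where w = char k = char K  (never true in characteristic 0) *)
Definition char_dvd (q : nat) : Prop := exists2 w : nat, w \in [pchar K] & (w %| q)%N.

(* degree-i piece of A over U: O_U(iD) = g^{-floor(p i / q)} B *)
Definition Apiece (B : {pred K}) (g : K) (p : int) (q : nat) (i : int) : {pred K} :=
  [pred x | x * g ^ ((p * i) %/ q%:Z)%Z \in B].

(* A homogeneous k-derivation of degree d of A = (+)_i A_i T^i, recorded by its
   components: delta (a T^i) = (delta i a) T^(i+d). *)
Definition graded_der (k B : {pred K}) (g : K) (p : int) (q : nat) (d : int)
    (delta : int -> K -> K) : Prop :=
  [/\ forall i, {in Apiece B g p q i, forall x, delta i x \in Apiece B g p q (i + d)},
      forall i, {in Apiece B g p q i &, forall x y, delta i (x + y) = delta i x + delta i y},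
      forall i j, {in Apiece B g p q i & Apiece B g p q j, forall x y,
          delta (i + j) (x * y) = delta i x * y + x * delta j y}
    & {in k, forall c, delta 0 c = 0}].

Definition graded_eq (B : {pred K}) (g : K) (p : int) (q : nat)
    (delta delta' : int -> K -> K) : Prop :=
  forall i, {in Apiece B g p q i, forall x, delta i x = delta' i x}.

(* phi_U(f) = f T^d . T d/dT :  a T^i |-> i f a T^(i+d) *)
Definition phiU (f : K) : int -> K -> K := fun i x => i%:~R * f * x.

(* psi_U(delta) = sigma_delta, recorded by its restriction to B (= degree 0),
   where T^{-d} delta (b) = sigma_delta(b) for b in B. *)
Definition psiU (delta : int -> K -> K) : K -> K := delta 0.

Definition kder (k B : {pred K}) (theta : K -> K) : Prop :=
  [/\ {in B &, forall x y, theta (x + y) = theta x + theta y},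
      {in B &, forall x y, theta (x * y) = theta x * y + x * theta y}
    & {in k, forall c, theta c = 0}].

(* sections of Theta_U(sV) = g^{-s} Der_k(B) *)
Definition Theta_sV (k B : {pred K}) (g : K) (s : int) (theta : K -> K) : Prop :=
  kder k B theta /\ {in B, forall x, theta x * g ^ s \in B}.

(* sections of Der_U(-log V)(sV) = g^{-s} {theta in Der_k(B) | theta(gB) in gB} *)
Definition LogDer_sV (k B : {pred K}) (g : K) (s : int) (theta : K -> K) : Prop :=
  Theta_sV k B g s theta /\ {in B, forall x, theta (g * x) * g ^ (s - 1) \in B}.

(* The sequence 0 -> O_U(tV) --phi--> (pi_* Theta_C)_d |_U --psi--> M -> 0
   is a well-defined short exact sequence (on sections over U). *)
Definition ses_U (k B : {pred K}) (g : K) (p : int) (q : nat) (d t : int)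
    (M : (K -> K) -> Prop) : Prop :=
  let N := [pred f : K | f * g ^ t \in B] in
  [/\ {in N, forall f, graded_der k B g p q d (phiU f)}
    & forall delta, graded_der k B g p q d delta -> M (psiU delta)] /\
  [/\ {in N &, forall f f', graded_eq B g p q (phiU f) (phiU f') -> f = f'},
      {in N, forall f, {in B, forall x, psiU (phiU f) x = 0}},
      forall delta, graded_der k B g p q d delta ->
        {in B, forall x, psiU delta x = 0} ->
        exists2 f, f \in N & graded_eq B g p q (phiU f) delta
    & forall theta, M theta ->
        exists2 delta, graded_der k B g p q d delta & {in B, forall x, psiU delta x = theta x}].

End Defs.

(* Main.v *)
Require Import Defs.
From HB Require Import structures.
From mathcomp Require Import all_boot all_order all_algebra.
From mathcomp Require Import zify ring.
Import Order.TTheory GRing.Theory Num.Theory.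
Local Open Scope ring_scope.
Definition mm (p : int) (q : nat) (i : int) : int := ((p * i) %/ q%:Z)%Z.

Lemma ApE (K : fieldType) (B : {pred K}) g p q i x :
  (x \in Apiece B g p q i) = (x * g ^ mm p q i \in B).
Proof. by []. Qed.

Section Basics.
Set Implicit Arguments. Unset Strict Implicit.
Variables (K : fieldType) (B : {pred K}).
Hypothesis hB : is_subring B.

Lemma sr1 : 1 \in B. Proof. by case: hB. Qed.
Lemma srB x y : x \in B -> y \in B -> x - y \in B. Proof. by case: hB => _ h _; apply: h. Qed.
Lemma srM x y : x \in B -> y \in B -> x * y \in B. Proof. by case: hB => _ _ h; apply: h. Qed.
Lemma sr0 : 0 \in B. Proof. by rewrite -(subrr 1) srB // sr1. Qed.
Lemma srN x : x \in B -> - x \in B. Proof. by move=> h; rewrite -sub0r srB // sr0. Qed.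
Lemma srD x y : x \in B -> y \in B -> x + y \in B.
Proof. by move=> hx hy; rewrite -(opprK y) srB // srN. Qed.
Lemma srn (n : nat) : n%:R \in B.
Proof. elim: n => [|n IH]; first by rewrite sr0. by rewrite -addn1 natrD srD // sr1. Qed.
Lemma srz (z : int) : z%:~R \in B.
Proof. case: z => n; first exact: (srn n). by rewrite NegzE mulrNz srN //; exact: (srn n.+1). Qed.
Lemma srzM (z : int) x : x \in B -> z%:~R * x \in B.
Proof. by move=> h; rewrite srM // srz. Qed.
Lemma srpow g (n : int) : g \in B -> (0 <= n)%R -> g ^ n \in B.
Proof.
move=> hg; case: n => // n _; rewrite -exprnP.
by elim: n => [|n IH]; rewrite ?expr0 ?sr1 // exprS srM.
Qed.
End Basics.
Unset Implicit Arguments. Set Strict Implicit.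
Definition Fd (K : fieldType) (theta : K -> K) (g : K) (p : int) (q : nat) (gam : K)
  : int -> K -> K :=
  fun i x => (i%:~R * gam - (mm p q i)%:~R * (theta g / g)) * x
             + g ^ (- mm p q i) * theta (x * g ^ mm p q i).

Arguments Fd {K}.
Section Main.
Variables (K : fieldType) (k B : {pred K}) (g : K) (p : int) (q : nat).
Hypotheses (hB : is_subring B) (hg0 : g != 0) (hgB : g \in B) (hq : (0 < q)%N).
Variable d : int.

Local Notation m := (mm p q).
Local Notation AP := (Apiece B g p q).

Lemma mm0 : m 0 = 0.
Proof. by rewrite /mm mulr0 div0z. Qed.

Lemma mmS i j : (0 <= m (i + j) - m i - m j <= 1)%R.
Proof. rewrite /mm. nia. Qed.

Lemma divb i : 0 <= p * i - q%:Z * m i < q%:Z.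
Proof. rewrite /mm. nia. Qed.
Lemma modf (x : int) : [/\ x = (x %/ q%:Z)%Z * q%:Z + (x %% q%:Z)%Z, 0 <= (x %% q%:Z)%Z & (x %% q%:Z)%Z < q%:Z].
Proof. split; [exact: divz_eq | apply: modz_ge0; lia | apply: ltz_pmod; lia]. Qed.
Lemma rdE : (p * d = -1 %[mod q%:Z])%Z <-> p * d - q%:Z * m d = q%:Z - 1.
Proof.
rewrite /mm; have [e1 a1 b1] := modf (p * d); have [e2 a2 b2] := modf (-1).
move: e1 a1 b1 e2 a2 b2.
move: ((p * d) %/ q%:Z)%Z ((p * d) %% q%:Z)%Z ((-1) %/ q%:Z)%Z ((-1) %% q%:Z)%Z => a b c e.
move: (p * d) => x e1 a1 b1 e2 a2 b2.
have hc1 : c * q%:Z < 0 by lia.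
have hc2 : - (q%:Z) <= c * q%:Z by lia.
have hc : c = -1.
  have h1 : c < 0 by nia.
  have h2 : -1 <= c by nia.
  lia.
subst c; split; lia.
Qed.
Lemma A3 i : p * d - q%:Z * m d = q%:Z - 1 -> m (i + d) - m i = m d -> p * i = q%:Z * m i.
Proof. have := divb i; have := divb d; have := divb (i + d). 
 move: (m i) (m d) (m (i + d)) => a b c. nia. Qed.
Lemma A1 : m (q%:Z + d) - m q%:Z = m d.
Proof. have hq0 : q%:Z != 0 by lia. rewrite /mm mulrDr divzMDl // mulzK //. ring. Qed.
Lemma A4 i : p * d - q%:Z * m d != q%:Z - 1 -> p * i - q%:Z * m i = 1 -> m (i + d) - m i = m d.
Proof. have := divb i; have := divb d; have := divb (i + d).
 move: (m i) (m d) (m (i + d)) => a b c. nia. Qed.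
Lemma A5 i : p * d - q%:Z * m d = q%:Z - 1 -> p * i - q%:Z * m i = 1 -> m (i + d) - m i = m d + 1.
Proof. have := divb i; have := divb d; have := divb (i + d).
 move: (m i) (m d) (m (i + d)) => a b c. nia. Qed.
Lemma A3' i : p * d - q%:Z * m d = q%:Z - 1 -> p * i != q%:Z * m i -> m (i + d) - m i = m d + 1.
Proof. have := divb i; have := divb d; have := divb (i + d).
 move: (m i) (m d) (m (i + d)) => a b c. nia. Qed.
Lemma A6 : p * d - q%:Z * m d != q%:Z - 1 -> (1 < q)%N.
Proof. have := divb d. move: (m d) => b. nia. Qed.
Lemma A7 : coprime `|p|%N q -> (1 < q)%N -> exists i, p * i - q%:Z * m i = 1.
Proof.
move=> hc hq1; have [u [v e]] := Bezoutz p q%:Z.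
have : gcdz p q%:Z = 1 by rewrite /gcdz absz_nat; move/eqP: hc => ->.
move=> g1; rewrite g1 in e; exists u.
have := divb u; move: (m u) => a h.
have h1 : q%:Z * (v + a) <= 1 by nia.
have h2 : 1 - q%:Z < q%:Z * (v + a) by nia.
have h3 : v + a <= 0 by nia.
have h4 : 0 <= v + a by nia.
nia.
Qed.

Lemma gD a b : g ^ (a + b) = g ^ a * g ^ b.
Proof. exact: expfzDr. Qed.

Lemma gN0 a : g ^ a != 0. Proof. exact: expfz_neq0. Qed.

Lemma gN a : g ^ (- a) = (g ^ a)^-1. Proof. by rewrite invr_expz. Qed.

Lemma shiftB y n e : y * g ^ n \in B -> (0 <= e)%R -> y * g ^ (n + e) \in B.
Proof. by move=> h he; rewrite gD mulrA srM // srpow. Qed.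

Lemma gm_in i : g ^ (- m i) \in AP i.
Proof. by rewrite ApE gN mulVf ?gN0 // sr1. Qed.

Lemma B_in0 x : x \in B -> x \in AP 0.
Proof. by rewrite ApE mm0 expr0z mulr1. Qed.

Lemma Lin (delta : int -> K -> K) :
  (forall i j, {in AP i & AP j, forall x y,
      delta (i + j) (x * y) = delta i x * y + x * delta j y}) ->
  {in B, forall x, delta 0 x = 0} ->
  exists gam, forall i, {in AP i, forall x, delta i x = i%:~R * gam * x}.
Proof.
move=> hL h0.
pose c i := delta i (g ^ (- m i)) * g ^ m i.
have ha i x : x \in AP i -> delta i x = c i * x.
  rewrite ApE => hx; have -> : x = g ^ (- m i) * (x * g ^ m i).
    by rewrite gN; field; exact: gN0.
  have := hL i 0 _ _ (gm_in i) (B_in0 _ hx); rewrite addr0 => ->.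
  rewrite h0 // mulr0 addr0 /c gN; field; exact: gN0.
have hc i j : c (i + j) = c i + c j.
  have hxy : g ^ (- m i) * g ^ (- m j) \in AP (i + j).
    rewrite ApE -!gD -!addrA; apply: srpow => //; have := mmS i j; lia.
  have := hL i j _ _ (gm_in i) (gm_in j).
  rewrite (ha _ _ hxy) (ha _ _ (gm_in i)) (ha _ _ (gm_in j)).
  move=> e; apply: (mulIf (mulf_neq0 (gN0 (- m i)) (gN0 (- m j)))).
  by rewrite e; ring.
have c0 : c 0 = 0.
  have := hc 0 0; rewrite addr0 => e.
  by apply: (addrI (c 0)); rewrite addr0 -e.
have cn (n : nat) : c n = n%:R * c 1.
  elim: n => [|n IH]; first by rewrite c0 mul0r.
  by rewrite -addn1 PoszD hc IH natrD mulrDl mul1r.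
exists (c 1) => i x hx; rewrite ha //; congr (_ * _).
case: i {hx} => n; first by rewrite cn.
have := hc (Negz n) n.+1; rewrite NegzE addNr c0 cn => /eqP.
rewrite eq_sym addr_eq0 => /eqP ->.
by rewrite mulrNz mulNr.
Qed.
Section FS.
Variables (theta : K -> K) (gam : K).
Hypothesis ht : kder k B theta.

Local Notation F := (@Fd K theta g p q gam).

Lemma tD x y : x \in B -> y \in B -> theta (x + y) = theta x + theta y.
Proof. by case: ht => h _ _; apply: h. Qed.
Lemma tM x y : x \in B -> y \in B -> theta (x * y) = theta x * y + x * theta y.
Proof. by case: ht => _ h _; apply: h. Qed.

Lemma FL i j : {in AP i & AP j, forall x y, F (i + j) (x * y) = F i x * y + x * F j y}.
Proof.
move=> x y; rewrite !ApE => hx hy; rewrite /Fd.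
have hmm := mmS i j.
have [e he] : exists e : int, m (i + j) = m i + m j + e /\ (e = 0 \/ e = 1).
  exists (m (i + j) - m i - m j); split; first ring. lia.
case: he => hE he; rewrite hE.
have hxy : x * y * g ^ (m i + m j + e) = (x * g ^ m i) * (y * g ^ m j) * g ^ e.
  by rewrite !gD; ring.
rewrite hxy !gN !gD !intrD.
have gi := gN0 (m i); have gj := gN0 (m j).
case: he => ->; rewrite ?expr0z ?expr1z ?mulr1.
  by rewrite tM //; field; rewrite gi gj hg0.
rewrite (tM _ _ (srM hB hx hy) hgB) (tM _ _ hx hy); field.
by rewrite gi gj hg0.
Qed.

Lemma FA i : {in AP i &, forall x y, F i (x + y) = F i x + F i y}.
Proof.
move=> x y; rewrite !ApE => hx hy; rewrite /Fd (mulrDl x y (g ^ m i)) (tD _ _ hx hy); ring.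
Qed.

Lemma F0 x : x \in B -> F 0 x = theta x.
Proof. move=> _; rewrite /Fd mm0 /= !expr0z mulr1 mul1r !mul0r subrr mul0r add0r //. Qed.


Lemma FM :
  (forall x, x \in B -> theta x * g ^ m d \in B) ->
  (forall i, (i%:~R * gam - (m i)%:~R * (theta g / g)) * g ^ (m (i + d) - m i) \in B) ->
  forall i, {in AP i, forall x, F i x \in AP (i + d)}.
Proof.
move=> hs hc i x; rewrite !ApE => hx.
have hmm := mmS i d.
set e := m (i + d) - m i - m d.
have he : 0 <= e by rewrite /e; lia.
have E1 : g ^ (m (i + d) - m i) = g ^ m d * g ^ e.
  by rewrite -gD; congr (g ^ _); rewrite /e; ring.
have E2 : g ^ (m (i + d)) = g ^ m i * g ^ m d * g ^ e.
  by rewrite -!gD; congr (g ^ _); rewrite /e; ring.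
have := hc i; rewrite E1 => hc'.
have := hs _ hx => hs'.
have -> : F i x * g ^ m (i + d) =
   ((i%:~R * gam - (m i)%:~R * (theta g / g)) * (g ^ m d * g ^ e)) * (x * g ^ m i)
   + (theta (x * g ^ m i) * g ^ m d) * g ^ e.
  by rewrite /Fd E2 gN; field; rewrite hg0 gN0.
by rewrite srD // srM // srpow.
Qed.
End FS.
Hypotheses (hk : is_subfield k) (hkB : {subset k <= B}) (hcop : coprime `|p|%N q).
Local Notation s := (m d).
Local Notation E i := (m (i + d) - m i).

Lemma k_sub : is_subring k.
Proof. by case: hk => a b c _; split. Qed.
Lemma kinv x : x \in k -> x^-1 \in k. Proof. by case: hk => _ _ _ h; apply: h. Qed.
Lemma intinvB (z : int) : (z%:~R : K)^-1 \in B.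
Proof. by apply: hkB; apply: kinv; apply: (srz k_sub). Qed.
Lemma k1 : 1 \in k. Proof. by case: hk. Qed.

Lemma mq : m q%:Z = p.
Proof. have hq0 : q%:Z != 0 by lia. by rewrite /mm mulzK. Qed.

Lemma shiftT y n t : y * g ^ n \in B -> (n <= t)%R -> y * g ^ t \in B.
Proof.
move=> h hn; have := shiftB _ _ (t - n) h; rewrite subrKC; apply; lia.
Qed.

Lemma phiG f : (forall i, i%:~R * f * g ^ E i \in B) -> graded_der k B g p q d (phiU f).
Proof.
move=> hf; split.
- move=> i x; rewrite !ApE => hx; rewrite /phiU.
  have eg : g ^ m (i + d) = g ^ E i * g ^ m i by rewrite -gD; congr (g ^ _); ring.
  have -> : i%:~R * f * x * g ^ m (i + d) = (i%:~R * f * g ^ E i) * (x * g ^ m i).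
    by rewrite eg; ring.
  by rewrite srM.
- move=> i x y _ _; rewrite /phiU; ring.
- move=> i j x y _ _; rewrite /phiU intrD; ring.
- by move=> c _; rewrite /phiU mulr0z !mul0r.
Qed.

Lemma der_kder delta : graded_der k B g p q d delta -> kder k B (delta 0).
Proof.
case=> _ hA hL hk0; split.
- by move=> x y hx hy; apply: hA; apply: B_in0.
- move=> x y hx hy; have := hL 0 0 x y (B_in0 _ hx) (B_in0 _ hy); by rewrite addr0.
- exact: hk0.
Qed.

Lemma psi_theta delta : graded_der k B g p q d delta -> Theta_sV k B g s (psiU delta).
Proof.
move=> hd; split; first exact: der_kder.
move=> x hx; case: hd => hm _ _ _; have := hm 0 x (B_in0 _ hx); by rewrite ApE add0r.
Qed.

Lemma Rep delta : graded_der k B g p q d delta ->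
  exists gam, forall i, {in AP i, forall x, delta i x = Fd (delta 0) g p q gam i x}.
Proof.
move=> hd; have hkd := der_kder _ hd.
case: (hd) => _ _ hL _.
pose d' i x := delta i x - Fd (delta 0) g p q 0 i x.
have [gam hg] : exists gam, forall i, {in AP i, forall x, d' i x = i%:~R * gam * x}.
  apply: Lin.
  - move=> i j x y hx hy; rewrite /d' hL // (FL (delta 0) 0 hkd i j x y hx hy); ring.
  - by move=> x hx; rewrite /d' F0 // subrr.
exists gam => i x hx; have := hg i x hx; rewrite /d' => e.
have -> : Fd (delta 0) g p q gam i x = Fd (delta 0) g p q 0 i x + i%:~R * gam * x.
  by rewrite /Fd; ring.
by rewrite -e; ring.
Qed.

Lemma memc delta gam : graded_der k B g p q d delta ->
  (forall i, {in AP i, forall x, delta i x = Fd (delta 0) g p q gam i x}) ->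
  forall i, (i%:~R * gam - (m i)%:~R * (delta 0 g / g)) * g ^ E i \in B.
Proof.
move=> hd hrep i; have hkd := der_kder _ hd.
case: (hd) => hm _ _ _.
have := hm i _ (gm_in i); rewrite ApE hrep ?gm_in // /Fd.
have t1 : delta 0 (g ^ (- m i) * g ^ m i) = 0.
  rewrite gN mulVf ?gN0 //; case: hkd => _ _ h; apply: h; exact: k1.
rewrite t1 mulr0 addr0.
have -> : g ^ m (i + d) = g ^ E i * g ^ m i by rewrite -gD; congr (g ^ _); ring.
set c := (_ - _); rewrite gN.
have -> : c * (g ^ m i)^-1 * (g ^ E i * g ^ m i) = c * g ^ E i.
  by field; rewrite gN0.
by [].
Qed.

Lemma beta3 (th : K -> K) gam : p * d - q%:Z * s != q%:Z - 1 ->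
  (forall i, (i%:~R * gam - (m i)%:~R * (th g / g)) * g ^ E i \in B) ->
  th g / g * g ^ s \in B.
Proof.
move=> hr hc.
have hq1 := A6 hr.
have [i0 hi0] := A7 hcop hq1.
have e0 := A4 i0 hr hi0.
have c0 := hc i0; have c1 := hc q%:Z.
rewrite e0 in c0; rewrite A1 mq in c1.
have eK : (p%:~R * i0%:~R - (q%:Z)%:~R * (m i0)%:~R : K) = 1.
  by have := congr1 (fun z : int => z%:~R : K) hi0; rewrite /= intrB !intrM.
have -> : th g / g * g ^ s = (q%:Z)%:~R * ((i0%:~R * gam - (m i0)%:~R * (th g / g)) * g ^ s)
     - i0%:~R * (((q%:Z)%:~R * gam - p%:~R * (th g / g)) * g ^ s).
  have -> : (q%:Z)%:~R * ((i0%:~R * gam - (m i0)%:~R * (th g / g)) * g ^ s)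
     - i0%:~R * (((q%:Z)%:~R * gam - p%:~R * (th g / g)) * g ^ s)
     = (p%:~R * i0%:~R - (q%:Z)%:~R * (m i0)%:~R) * (th g / g * g ^ s) by ring.
  by rewrite eK mul1r.
by rewrite srB // srM // srz.
Qed.

Lemma beta2 (th : K -> K) gam : (q%:Z%:~R : K) = 0 -> (p%:~R : K) != 0 ->
  (forall i, (i%:~R * gam - (m i)%:~R * (th g / g)) * g ^ E i \in B) ->
  th g / g * g ^ s \in B.
Proof.
move=> hq0 hp0 hc.
have c1 := hc q%:Z; rewrite A1 mq in c1.
have -> : th g / g * g ^ s = - (p%:~R)^-1 * (((q%:Z)%:~R * gam - p%:~R * (th g / g)) * g ^ s).
  by rewrite hq0; field; rewrite hp0 ?hg0.
by rewrite srM // srN // intinvB.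
Qed.

Lemma log_of (th : K -> K) : Theta_sV k B g s th -> th g / g * g ^ s \in B ->
  LogDer_sV k B g s th.
Proof.
move=> [hkd hs] hb; split; first by split.
move=> x hx; have -> : th (g * x) * g ^ (s - 1) = (th g / g * g ^ s) * x + th x * g ^ s.
  by case: hkd => _ hM _; rewrite hM // gD exprN1; field; rewrite ?hg0.
by apply: srD => //; [exact: srM | exact: hs].
Qed.

Lemma beta_of_log (th : K -> K) : LogDer_sV k B g s th -> th g / g * g ^ s \in B.
Proof.
move=> [_ hl]; have := hl 1 (sr1 hB); rewrite mulr1 gD exprN1.
by have -> : th g * (g ^ s * g^-1) = th g / g * g ^ s by ring.
Qed.

Lemma fN_gen gam t i0 : (forall i, i%:~R * gam * g ^ E i \in B) ->
  p * i0 - q%:Z * m i0 = 1 -> (E i0 <= t)%R -> (s <= t)%R -> gam * g ^ t \in B.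
Proof.
move=> hg hi0 h1 h2.
have c0 := shiftT _ _ _ (hg i0) h1.
have c1 := hg q%:Z; rewrite A1 in c1; have c2 := shiftT _ _ _ c1 h2.
have eK : (p%:~R * i0%:~R - (q%:Z)%:~R * (m i0)%:~R : K) = 1.
  by have := congr1 (fun z : int => z%:~R : K) hi0; rewrite /= intrB !intrM.
have -> : gam * g ^ t = p%:~R * (i0%:~R * gam * g ^ t) - (m i0)%:~R * ((q%:Z)%:~R * gam * g ^ t).
  have -> : p%:~R * (i0%:~R * gam * g ^ t) - (m i0)%:~R * ((q%:Z)%:~R * gam * g ^ t)
     = (p%:~R * i0%:~R - (q%:Z)%:~R * (m i0)%:~R) * (gam * g ^ t) by ring.
  by rewrite eK mul1r.
by rewrite srB // srM // srz.
Qed.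

Lemma fN1 gam : (q%:Z%:~R : K) != 0 -> (forall i, i%:~R * gam * g ^ E i \in B) -> gam * g ^ s \in B.
Proof.
move=> hq0 hg; have c1 := hg q%:Z; rewrite A1 in c1.
have -> : gam * g ^ s = (q%:Z%:~R)^-1 * ((q%:Z)%:~R * gam * g ^ s) by field; rewrite hq0.
by rewrite srM // intinvB.
Qed.

Lemma surjF th gam : kder k B th -> (forall x, x \in B -> th x * g ^ s \in B) ->
  (forall i, (i%:~R * gam - (m i)%:~R * (th g / g)) * g ^ E i \in B) ->
  exists2 delta, graded_der k B g p q d delta & {in B, forall x, psiU delta x = th x}.
Proof.
move=> hkd hs hc; exists (Fd th g p q gam).
  split; [exact: (FM th gam hs hc) | exact: (FA th gam hkd) | exact: (FL th gam hkd) |].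
  move=> c hc'; rewrite F0 ?hkB //; case: hkd => _ _ h; exact: h.
by move=> x hx; rewrite /psiU F0.
Qed.

Lemma c_case1 th : th g * g ^ s \in B -> p * d - q%:Z * s = q%:Z - 1 -> (q%:Z%:~R : K) != 0 ->
  forall i, (i%:~R * (p%:~R / q%:Z%:~R * (th g / g)) - (m i)%:~R * (th g / g)) * g ^ E i \in B.
Proof.
move=> htg hr hq0 i.
have ec : i%:~R * (p%:~R / q%:Z%:~R * (th g / g)) - (m i)%:~R * (th g / g)
   = (p * i - q%:Z * m i)%:~R / q%:Z%:~R * (th g / g).
  by rewrite intrB !intrM; field; rewrite ?hq0 ?hg0.
rewrite ec; have [h0|h1] := eqVneq (p * i) (q%:Z * m i).
  by rewrite h0 subrr mulr0z !mul0r sr0.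
rewrite (A3' i hr h1) gD.
have -> : (p * i - q%:Z * m i)%:~R / q%:Z%:~R * (th g / g) * (g ^ s * g ^ 1)
   = ((p * i - q%:Z * m i)%:~R * (q%:Z%:~R)^-1) * (th g * g ^ s).
  by rewrite expr1z; field; rewrite ?hq0 ?hg0.
by rewrite srM // srM // ?srz ?intinvB.
Qed.

Lemma ses_gen t (M : (K -> K) -> Prop) :
  (forall f, f * g ^ t \in B -> forall i, i%:~R * f * g ^ E i \in B) ->
  (forall delta, graded_der k B g p q d delta -> M (psiU delta)) ->
  (forall gam, (forall i, i%:~R * gam * g ^ E i \in B) -> gam * g ^ t \in B) ->
  (forall th, M th -> exists2 delta, graded_der k B g p q d delta & {in B, forall x, psiU delta x = th x}) ->
  ses_U k B g p q d t M.
Proof.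
move=> h1 h2 h3 h4; rewrite /ses_U /=; split; split => //.
- move=> f hf; apply: phiG => i; exact: (h1 f hf i).
- move=> f f' _ _ he; have := he 1 _ (gm_in 1); rewrite /phiU => e.
  by apply: (mulIf (gN0 (- m 1))); rewrite !mulr1z !mul1r in e.
- by move=> f _ x _; rewrite /psiU /phiU mulr0z !mul0r.
- move=> delta hd h0; case: (hd) => hm _ hL _.
  have [gam hg] := Lin delta hL h0.
  exists gam; last by move=> i x hx; rewrite /phiU hg.
  apply: h3 => i; have := hm i _ (gm_in i); rewrite ApE hg ?gm_in //.
  have -> : g ^ m (i + d) = g ^ E i * g ^ m i by rewrite -gD; congr (g ^ _); ring.
  have -> : i%:~R * gam * g ^ (- m i) * (g ^ E i * g ^ m i) = i%:~R * gam * g ^ E i.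
    by rewrite gN; field; rewrite gN0.
  by [].
Qed.

Lemma nchar_q : ~ char_dvd K q -> (q%:Z%:~R : K) != 0.
Proof.
move=> hn; apply/negP => h0; apply: hn.
have h0' : (q%:R : K) == 0 by exact: h0.
have [w hw] := natf0_pchar hq h0'.
by exists w => //; rewrite (dvdn_pcharf hw).
Qed.

Lemma char_q : char_dvd K q -> (q%:Z%:~R : K) = 0.
Proof. case=> w hw hd; apply/eqP; have := dvdn_pcharf hw q; rewrite hd; by move<-. Qed.

Lemma char_p : char_dvd K q -> (p%:~R : K) != 0.
Proof.
case=> w hw hd; apply/negP => /eqP hp.
have hpa : (`|p|%N%:R : K) == 0.
  have : (`|p|%N%:R : K) = ((-1) ^+ (p < 0)%R * p)%:~R by rewrite -abszEsign.
  by rewrite intrM hp mulr0 => ->.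
have hw1 : (w %| `|p|)%N by rewrite (dvdn_pcharf hw).
have : (w %| gcdn `|p| q)%N by rewrite dvdn_gcd hw1 hd.
move/eqP: hcop => ->; rewrite dvdn1 => /eqP w1.
by have := pcharf_prime hw; rewrite w1.
Qed.

Lemma main3 :
  [/\ ((p * d = -1 %[mod q%:Z])%Z -> ~ char_dvd K q -> ses_U k B g p q d s (Theta_sV k B g s)),
      ((p * d = -1 %[mod q%:Z])%Z -> char_dvd K q -> ses_U k B g p q d (s + 1) (LogDer_sV k B g s))
    & (~ (p * d = -1 %[mod q%:Z])%Z -> ses_U k B g p q d s (LogDer_sV k B g s))].
Proof.
have Es i : (s <= E i)%R by have := mmS i d; lia.
split.
- move=> /rdE hr hc; have hq0 := nchar_q hc.
  apply: ses_gen.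
  + by move=> f hf i; rewrite -mulrA; apply: (srzM hB); exact: (shiftT _ _ _ hf (Es i)).
  + exact: psi_theta.
  + by move=> gam hg; apply: fN1.
  + move=> th [hkd hs]; apply: (surjF th _ hkd hs).
    by apply: c_case1 => //; apply: hs.
- move=> /rdE hr hc; have hq0 := char_q hc; have hp0 := char_p hc.
  have hq1 : (1 < q)%N.
    case: (ltnP 1 q) => // hq1; have q1 : q = 1%N by lia.
    by move: hq0; rewrite q1 /= mulr1z => /eqP; rewrite oner_eq0.
  apply: ses_gen.
  + move=> f hf i.
    have [h0|h1] := eqVneq (p * i) (q%:Z * m i).
      have hi0 : (i%:~R : K) = 0.
        have := congr1 (fun z : int => z%:~R : K) h0; rewrite /= !intrM hq0 mul0r.
        by move/eqP; rewrite mulf_eq0 (negbTE hp0) /= => /eqP.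
      by rewrite hi0 !mul0r sr0.
    rewrite (A3' i hr h1) -mulrA; apply: (srzM hB).
    by apply: (shiftT _ _ _ hf); lia.
  + move=> delta hd; have [gam hg] := Rep _ hd.
    apply: log_of; first exact: psi_theta.
    exact: (beta2 _ gam hq0 hp0 (memc _ _ hd hg)).
  + move=> gam hg; have [i0 hi0] := A7 hcop hq1.
    by apply: (fN_gen _ _ i0 hg hi0); rewrite ?(A5 i0 hr hi0) //; lia.
  + move=> th hl; have [[hkd hs] _] := hl; apply: (surjF th 0 hkd hs) => i.
    have hb := beta_of_log _ hl.
    rewrite mulr0 sub0r mulNr -mulrA; apply: (srN hB); apply: (srzM hB).
    exact: (shiftT _ _ _ hb (Es i)).
- move=> hn; have hr : p * d - q%:Z * s != q%:Z - 1 by apply/eqP => /rdE.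
  have hq1 := A6 hr.
  apply: ses_gen.
  + by move=> f hf i; rewrite -mulrA; apply: (srzM hB); exact: (shiftT _ _ _ hf (Es i)).
  + move=> delta hd; have [gam hg] := Rep _ hd.
    apply: log_of; first exact: psi_theta.
    exact: (beta3 _ gam hr (memc _ _ hd hg)).
  + move=> gam hg; have [i0 hi0] := A7 hcop hq1.
    by apply: (fN_gen _ _ i0 hg hi0); rewrite ?(A4 i0 hr hi0) //.
  + move=> th hl; have [[hkd hs] _] := hl; apply: (surjF th 0 hkd hs) => i.
    have hb := beta_of_log _ hl.
    rewrite mulr0 sub0r mulNr -mulrA; apply: (srN hB); apply: (srzM hB).
    exact: (shiftT _ _ _ hb (Es i)).
Qed.

End Main.

Theorem proposition4p3 (K : fieldType) (k B : {pred K}) (g : K)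
    (p : int) (q : nat) (d : int) :
  is_subfield k -> is_subring B -> {subset k <= B} ->
  fg_algebra k B -> is_frac_field_of B -> integrally_closed B ->
  g \in B -> g != 0 -> (g^-1 \in B \/ prime_elt B g) ->
  (0 < q)%N -> coprime `|p|%N q ->
  let s := ((p * d) %/ q%:Z)%Z in
  [/\ ((p * d = -1 %[mod q%:Z])%Z -> ~ char_dvd K q ->
         ses_U k B g p q d s (Theta_sV k B g s)),
      ((p * d = -1 %[mod q%:Z])%Z -> char_dvd K q ->
         ses_U k B g p q d (s + 1) (LogDer_sV k B g s))
    & (~ (p * d = -1 %[mod q%:Z])%Z ->
         ses_U k B g p q d s (LogDer_sV k B g s))].
Proof.
move=> hk hB hkB _ _ _ hgB hg0 _ hq hcop s.
exact: (@main3 K k B g p q hB hg0 hgB hq d hk hkB hcop).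
Qed.
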